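(* Let $\boldsymbol\xi_i=(\xi_i^1,\dots,\xi_i^k)\in\mathbb{R}^k$, $i\in\mathbb{Z}$, be independent, identically distributed vectors of (possibly dependent) non-negative random variables, and let $f$ be a directionally convex function on $\mathbb{R}^k$. Define $g$ on $\mathbb{Z}$ by $g(n)=\mathbb{E}f\big(\mathrm{sgn}(n)\sum_{i=1}^{|n|}\boldsymbol\xi_i\big)$ for $n\ne0$ and $g(0)=f(0,\dots,0)$. Then $g$ is convex on $\mathbb{Z}$, i.e. $g(n-1)+g(n+1)-2g(n)\ge0$ for all $n\in\mathbb{Z}$ (whenever the expectations are finite).
   Context: A measurable $f:\mathbb{R}^k\to\mathbb{R}$ is directionally convex if $\Delta^i_\epsilon\Delta^j_\delta f(x)\ge0$ for all $x\in\mathbb{R}^k$, $\epsilon,\delta>0$, $i,j\in\{1,\dots,k\}$, where $\Delta^i_\epsilon f(x)=f(x+\epsilon e_i)-f(x)$ and $e_i$ are the canonical basis vectors. $\mathrm{sgn}(n)=n/|n|$ for $n\ne0$. *)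

(* Defs.v *)
From HB Require Import structures.
From mathcomp Require Import all_boot all_order all_algebra.
From mathcomp Require Import all_classical all_reals all_analysis.
Set Implicit Arguments. Unset Strict Implicit. Unset Printing Implicit Defensive.
Import Order.TTheory GRing.Theory Num.Theory.
Local Open Scope classical_set_scope.
Local Open Scope ring_scope.

(* R^k is represented by k.-tuple R, equipped (by MathComp-Analysis) with the
   product (Borel) sigma-algebra generated by the coordinate projections. *)

Definition shift (R : realType) (k : nat) (x : k.-tuple R) (i : 'I_k) (eps : R)
  : k.-tuple R :=
  [tuple (tnth x j + (if j == i then eps else 0)) | j < k].

Definition Delta (R : realType) (k : nat) (i : 'I_k) (eps : R)
  (f : k.-tuple R -> R) : k.-tuple R -> R :=
  fun x => f (shift x i eps) - f x.

Definition directionally_convex (R : realType) (k : nat) (f : k.-tuple R -> R) :=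
  measurable_fun [set: k.-tuple R] f /\
  forall (x : k.-tuple R) (eps delta : R) (i j : 'I_k),
    0 < eps -> 0 < delta -> 0 <= Delta i eps (Delta j delta f) x.

Definition vzero (R : realType) (k : nat) : k.-tuple R := [tuple 0 | _ < k].

Definition signed_sum (R : realType) (k : nat) (T : Type)
  (xi : int -> T -> k.-tuple R) (n : int) : T -> k.-tuple R :=
  fun w => [tuple ((Num.sg n)%:~R *
                   \sum_(1 <= i < (`|n|%N).+1) tnth (xi (Posz i) w) j) | j < k].

Definition gfun d (T : measurableType d) (R : realType) (P : probability T R)
  (k : nat) (xi : int -> T -> k.-tuple R) (f : k.-tuple R -> R) (n : int) : R :=
  if n == 0 then f (vzero R k)
  else fine ('E_P[f \o signed_sum xi n])%E.

Definition mutually_independent d (T : measurableType d) (R : realType)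
  (P : probability T R) (k : nat) (xi : int -> T -> k.-tuple R) :=
  forall (J : seq int) (B : int -> set (k.-tuple R)),
    uniq J -> (forall j, j \in J -> measurable (B j)) ->
    P (\bigcap_(j in [set` J]) (xi j @^-1` B j)) =
    (\prod_(j <- J) P (xi j @^-1` B j))%E.

Definition identically_distributed d (T : measurableType d) (R : realType)
  (P : probability T R) (k : nat) (xi : int -> T -> k.-tuple R) :=
  forall (i j : int) (B : set (k.-tuple R)), measurable B ->
    P (xi i @^-1` B) = P (xi j @^-1` B).

(* Main.v *)
From Pilot Require Import Defs.
From HB Require Import structures.
From mathcomp Require Import all_boot all_order all_algebra.
From mathcomp Require Import all_classical all_reals all_analysis.
From mathcomp Require Import ring lra zify measurable_realfun.
Import Order.TTheory GRing.Theory Num.Theory.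
Local Open Scope classical_set_scope.
Local Open Scope ring_scope.

Section VecA.
Context (R : realType) (k : nat).
Local Notation U := (k.-tuple R).

Lemma le_of_eq (x y : R) : x = y -> x <= y. Proof. by move->. Qed.

Definition vadd (x y : U) : U := [tuple tnth x j + tnth y j | j < k].
Definition vneg (x : U) : U := [tuple - tnth x j | j < k].
Definition nonneg (a : U) := forall j, 0 <= tnth a j.

Definition supmod (h : U -> R) := forall x a b, nonneg a -> nonneg b ->
  0 <= h x + h (vadd (vadd x a) b) - h (vadd x a) - h (vadd x b).

Lemma shift0 (x : U) i : Pilot.Defs.shift x i 0 = x.
Proof. by apply: eq_from_tnth => j; rewrite tnth_mktuple; case: eqP => _; rewrite addr0. Qed.

Lemma mono_vadd (h : U -> R) :
  (forall x i eps, 0 < eps -> h x <= h (Pilot.Defs.shift x i eps)) ->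
  forall x a, nonneg a -> h x <= h (vadd x a).
Proof.
move=> H x a a0.
pose part (p : nat) : U := [tuple if (j < p)%N then tnth a j else 0 | j < k].
suff: forall p, (p <= k)%N -> h x <= h (vadd x (part p)).
  move/(_ k (leqnn k)); congr (_ <= h _); apply: eq_from_tnth => j.
  by rewrite !tnth_mktuple ltn_ord.
elim=> [_|p IH Hp].
  by apply: le_of_eq; congr h; apply: eq_from_tnth => j; rewrite !tnth_mktuple addr0.
apply: (le_trans (IH (ltnW Hp))).
have -> : vadd x (part p.+1) = Pilot.Defs.shift (vadd x (part p)) (Ordinal Hp) (tnth a (Ordinal Hp)).
  apply: eq_from_tnth => j; rewrite !tnth_mktuple ltnS.
  rewrite (_ : (j == Ordinal Hp) = (nat_of_ord j == p)) //.
  case: (boolP (j <= p)%N) => h1; case: (boolP (j < p)%N) => h2;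
    case: (boolP (nat_of_ord j == p)) => h3 /=; rewrite ?addr0 ?add0r //; try (exfalso; lia).
  congr (_ + tnth a _); apply: val_inj; exact/eqP.
have [ap|ap] := eqVneq (tnth a (Ordinal Hp)) 0.
  by rewrite ap shift0.
apply: H; rewrite lt_neqAle eq_sym ap; exact: a0.
Qed.

Lemma vaddC (x y : U) : vadd x y = vadd y x.
Proof. by apply: eq_from_tnth => j; rewrite !tnth_mktuple addrC. Qed.
Lemma vaddA (x y z : U) : vadd (vadd x y) z = vadd x (vadd y z).
Proof. by apply: eq_from_tnth => j; rewrite !tnth_mktuple addrA. Qed.
Lemma shift_vadd (y a : U) j eps : Pilot.Defs.shift (vadd y a) j eps = vadd (Pilot.Defs.shift y j eps) a.
Proof. by apply: eq_from_tnth => i; rewrite !tnth_mktuple; ring. Qed.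

Lemma dc_supmod (f : U -> R) : directionally_convex f -> supmod f.
Proof.
move=> [_ DC] x a b a0 b0.
have step1 : forall j delta, 0 < delta -> forall y,
    Delta j delta f y <= Delta j delta f (vadd y a).
  move=> j delta dp y; apply: mono_vadd => // z i eps ep.
  by rewrite -subr_ge0; exact: DC.
have H : f (vadd x a) - f x <= f (vadd (vadd x b) a) - f (vadd x b).
  apply: (@mono_vadd (fun y => f (vadd y a) - f y)) => // y i eps ep.
  have S := step1 i eps ep y; rewrite /Delta shift_vadd in S; rewrite /=; lra.
rewrite (vaddA x a b) (vaddC a b) -vaddA; lra.
Qed.

Lemma supmod_neg (f : U -> R) : supmod f -> supmod (fun x => f (vneg x)).
Proof.
move=> H x a b a0 b0.
have := H (vneg (vadd (vadd x a) b)) a b a0 b0.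
have E1 : vadd (vadd (vneg (vadd (vadd x a) b)) a) b = vneg x.
  by apply: eq_from_tnth => j; rewrite !tnth_mktuple; ring.
have E2 : vadd (vneg (vadd (vadd x a) b)) a = vneg (vadd x b).
  by apply: eq_from_tnth => j; rewrite !tnth_mktuple; ring.
have E3 : vadd (vneg (vadd (vadd x a) b)) b = vneg (vadd x a).
  by apply: eq_from_tnth => j; rewrite !tnth_mktuple; ring.
rewrite E1 E2 E3 => H'; apply: le_trans H' _; apply: le_of_eq; ring.
Qed.
End VecA.
Arguments vadd {R k}.
Arguments vneg {R k}.
Arguments nonneg {R k}.
Arguments supmod {R k}.
Arguments dc_supmod {R k f}.
Arguments supmod_neg {R k f}.
Section LawB.
Context d (T : measurableType d) (R : realType) (P : probability T R) (k : nat)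
  (xi : int -> T -> k.-tuple R).
Local Notation U := (k.-tuple R).
Hypothesis mxi : forall i, measurable_fun [set: T] (xi i).
Hypothesis indep : mutually_independent P xi.
Hypothesis ident : identically_distributed P xi.

Definition Zf {N} (idx : 'I_N -> int) : T -> N.-tuple U :=
  fun w => [tuple xi (idx i) w | i < N].

Lemma measurable_Zf {N} (idx : 'I_N -> int) : measurable_fun [set: T] (Zf idx).
Proof.
apply/measurable_fun_tnthP => i.
rewrite (_ : _ \o _ = xi (idx i)); first exact: mxi.
by apply: funext => w /=; rewrite tnth_mktuple.
Qed.

Definition rect {N} (B : 'I_N -> set U) : set (N.-tuple U) :=
  [set t | forall i, B i (tnth t i)].

Definition Grect N : set (set (N.-tuple U)) :=
  [set A | exists B : 'I_N -> set U, (forall i, measurable (B i)) /\ A = rect B].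

Lemma rect_measurable {N} (B : 'I_N -> set U) : (forall i, measurable (B i)) ->
  measurable (rect B).
Proof.
move=> mB.
have -> : rect B = \bigcap_(i in [set: 'I_N]) ((fun t : N.-tuple U => tnth t i) @^-1` B i).
  by apply/seteqP; split => t /= H i; [move=> _; exact: H|exact: H].
apply: fin_bigcap_measurable; first exact: finite_finset.
move=> i _; rewrite -[X in measurable X]setTI; apply: measurable_tnth => //.
Qed.

Lemma Grect_gen N : @measurable _ (N.-tuple U) = <<s Grect N >>.
Proof.
apply/seteqP; split; last first.
  apply: smallest_sub; first exact: sigma_algebra_measurable.
  by move=> A [B [mB ->]]; exact: rect_measurable.
apply: smallest_sub; first exact: smallest_sigma_algebra.
rewrite -bigcup_seq => X [i _ [Y mY <-]].
apply: sub_sigma_algebra; exists (fun j => if j == i then Y else setT); split.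
  by move=> j; case: ifP.
apply/seteqP; split => t /=.
  by move=> [_ tY] j; case: eqP => [->|].
by move=> H; split => //; have := H i; rewrite eqxx.
Qed.

Lemma rect_prob {N} (idx : 'I_N -> int) (B : 'I_N -> set U) :
  injective idx -> (forall i, measurable (B i)) ->
  P (Zf idx @^-1` rect B) = (\prod_(i <- enum 'I_N) P (xi 0 @^-1` B i))%E.
Proof.
move=> inj mB.
pose B' (j : int) := if [pick i | idx i == j] is Some i then B i else setT.
have B'E i : B' (idx i) = B i.
  rewrite /B'; case: pickP => [i' /eqP /inj -> //|/(_ i)]; by rewrite eqxx.
have -> : Zf idx @^-1` rect B =
    \bigcap_(j in [set` map idx (enum 'I_N)]) (xi j @^-1` B' j).
  apply/seteqP; split => w /=.
    move=> H j /mapP [i _ ->]; rewrite B'E; have := H i; by rewrite tnth_mktuple.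
  move=> H i; rewrite tnth_mktuple -B'E; apply: H.
  by apply/mapP; exists i => //; rewrite mem_enum.
rewrite indep; first last.
- by move=> j _; rewrite /B'; case: pickP => // i _; exact: mB.
- by rewrite map_inj_uniq // enum_uniq.
rewrite big_map; apply: eq_bigr => i _; rewrite B'E; exact: ident.
Qed.

Definition mkZ {N} (idx : 'I_N -> int) : {mfun T >-> N.-tuple U} :=
  HB.pack (Zf idx) (isMeasurableFun.Build _ _ _ _ _ (measurable_Zf idx)).

Lemma law_eq {N} (idx idx' : 'I_N -> int) : injective idx -> injective idx' ->
  forall A, measurable A -> P (Zf idx @^-1` A) = P (Zf idx' @^-1` A).
Proof.
move=> inj inj' A mA.
have := @measure_unique _ R (N.-tuple U) (Grect N) (fun _ => setT) (Grect_gen N) _ _ _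
  (distribution P (mkZ idx)) (distribution P (mkZ idx')) _ _ A mA.
apply.
- move=> A1 A2 [B1 [mB1 ->]] [B2 [mB2 ->]]; exists (fun i => B1 i `&` B2 i); split.
    by move=> i; exact: measurableI.
  by apply/seteqP; split => t /=; [move=> [H1 H2] i; split|move=> H; split => i; have [] := H i].
- move=> _; exists (fun _ => setT); split => //.
  by apply/seteqP; split => t.
- by apply/seteqP; split => // t _; exists 0%N.
- move=> A' [B [mB ->]]; rewrite /distribution /pushforward /=.
  by rewrite [LHS](@rect_prob N idx B inj mB) [RHS](@rect_prob N idx' B inj' mB).
- by move=> _; apply: (le_lt_trans (probability_le1 _ measurableT)); rewrite ltry.
Qed.

Lemma transfer {N} (idx idx' : 'I_N -> int) (F : N.-tuple U -> R) :
  injective idx -> injective idx' -> measurable_fun [set: N.-tuple U] F ->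
  P.-integrable [set: T] (EFin \o (F \o Zf idx)) ->
  P.-integrable [set: T] (EFin \o (F \o Zf idx')) /\
  (\int[P]_x (F (Zf idx x))%:E = \int[P]_x (F (Zf idx' x))%:E)%E.
Proof.
move=> inj inj' mF iF.
have law A : measurable A -> A `<=` setT ->
    pushforward P (Zf idx') A = pushforward P (Zf idx) A.
  by move=> mA _; rewrite /pushforward (@law_eq N idx idx' inj inj' A mA).
have mZ := measurable_Zf idx; have mZ' := measurable_Zf idx'.
have iF' : P.-integrable [set: T] (EFin \o (F \o Zf idx')).
  apply/integrableP; split.
    by apply/measurable_EFinP; apply: measurableT_comp => //.
  move/integrableP: iF => [_]; apply: le_lt_trans; rewrite le_eqVlt; apply/orP; left; apply/eqP.
  have mabs : measurable_fun [set: N.-tuple U] (fun y => `|(F y)%:E|%E).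
    by apply: measurableT_comp; [exact: abse_measurable|exact/measurable_EFinP].
  transitivity (\int[pushforward P (Zf idx')]_y `|(F y)%:E|)%E.
    by rewrite ge0_integral_pushforward.
  rewrite [LHS](eq_measure_integral (pushforward P (Zf idx))) //.
  by rewrite ge0_integral_pushforward.
split => //.
transitivity (\int[pushforward P (Zf idx)]_y (F y)%:E)%E.
  by rewrite integral_pushforward //; exact/measurable_EFinP.
rewrite [LHS](eq_measure_integral (pushforward P (Zf idx'))); last first.
  by move=> A mA AD; symmetry; exact: law.
by rewrite integral_pushforward //; exact/measurable_EFinP.
Qed.

End LawB.

Section Core.
Context d (T : measurableType d) (R : realType) (P : probability T R) (k : nat)
  (xi : int -> T -> k.-tuple R).
Local Notation U := (k.-tuple R).
Hypothesis mxi : forall i, measurable_fun [set: T] (xi i).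
Hypothesis indep : mutually_independent P xi.
Hypothesis ident : identically_distributed P xi.
Hypothesis xi0 : forall i w, nonneg (xi i w).
Local Notation Z := (@Zf d T R k xi _).

Definition S (p : nat) (w : T) : U :=
  [tuple \sum_(i < p) tnth (xi (Posz i.+1) w) j | j < k].

Lemma S_rec p w : S p.+1 w = vadd (S p w) (xi (Posz p.+1) w).
Proof. by apply: eq_from_tnth => j; rewrite !tnth_mktuple big_ord_recr. Qed.

Lemma S0 w : S 0 w = vzero R k.
Proof. by apply: eq_from_tnth => j; rewrite !tnth_mktuple big_ord0. Qed.

Lemma measurable_S p : measurable_fun [set: T] (S p).
Proof.
apply/measurable_fun_tnthP => j.
rewrite (_ : _ \o _ = fun w => \sum_(i < p) tnth (xi (Posz i.+1) w) j); last first.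
  by apply: funext => w /=; rewrite tnth_mktuple.
apply: (@measurable_sum _ _ _ setT _ _ (fun (i : 'I_p) w => tnth (xi (Posz i.+1) w) j)) => i.
exact: (measurableT_comp (measurable_tnth j) (mxi (Posz i.+1))).
Qed.

Lemma iD (f1 f2 : T -> R) : P.-integrable [set: T] (EFin \o f1) ->
  P.-integrable [set: T] (EFin \o f2) ->
  P.-integrable [set: T] (EFin \o (fun x => f1 x + f2 x)).
Proof.
move=> H1 H2.
suff -> : EFin \o (fun x => f1 x + f2 x) = ((EFin \o f1) \+ (EFin \o f2))%E by exact: integrableD.
by apply: funext => x /=; rewrite EFinD.
Qed.

Lemma iB (f1 f2 : T -> R) : P.-integrable [set: T] (EFin \o f1) ->
  P.-integrable [set: T] (EFin \o f2) ->
  P.-integrable [set: T] (EFin \o (fun x => f1 x - f2 x)).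
Proof.
move=> H1 H2.
suff -> : EFin \o (fun x => f1 x - f2 x) = ((EFin \o f1) \- (EFin \o f2))%E by exact: integrableB.
by apply: funext => x /=; rewrite EFinB.
Qed.

Lemma core (h : U -> R) (m : nat) : supmod h -> measurable_fun [set: U] h ->
  (forall q, (q <= m.+2)%N -> (m <= q)%N ->
     P.-integrable [set: T] (EFin \o (fun w => h (S q w)))) ->
  0 <= Rintegral P setT (fun w => h (S m w)) + Rintegral P setT (fun w => h (S m.+2 w))
       - 2 * Rintegral P setT (fun w => h (S m.+1 w)).
Proof.
move=> hs mh hint.
pose g (n : nat) : nat := if n == m then m.+2 else if n == m.+1 then m.+1 else n.+1.
pose idx (i : 'I_m.+2) := Posz i.+1.
pose idx' (i : 'I_m.+2) := Posz (g i).
have inj : injective idx by move=> i j [] E; apply: val_inj.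
have inj' : injective idx'.
  move=> i j [] E; apply: ord_inj; move: E (ltn_ord i) (ltn_ord j); rewrite /g.
  by repeat (case: eqP => ?); lia.
pose G (p : nat) (t : m.+2.-tuple U) : U :=
  [tuple \sum_(i < m.+2 | (i < p)%N) tnth (tnth t i) j | j < k].
have mG p : measurable_fun [set: m.+2.-tuple U] (G p).
  apply/measurable_fun_tnthP => j.
  rewrite (_ : _ \o _ = fun t => \sum_(i < m.+2) (if (i < p)%N then tnth (tnth t i) j else 0)); last first.
    by apply: funext => t /=; rewrite tnth_mktuple big_mkcond.
  apply: (@measurable_sum _ _ _ setT _ _ (fun (i : 'I_m.+2) (t : m.+2.-tuple U) => if (i < p)%N then tnth (tnth t i) j else 0)) => i.
  rewrite /=; case: (i < p)%N; last exact: measurable_cst.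
  exact: (measurableT_comp (measurable_tnth j) (measurable_tnth i)).
have GZ p w : (p <= m.+2)%N -> G p (Z idx w) = S p w.
  move=> pm; apply: eq_from_tnth => j; rewrite !tnth_mktuple.
  rewrite (big_ord_widen _ (fun i => tnth (xi (Posz i.+1) w) j) pm).
  by apply: eq_bigr => i _; rewrite tnth_mktuple.
have GZ' w : G m.+1 (Z idx' w) = vadd (S m w) (xi (Posz m.+2) w).
  apply: eq_from_tnth => j; rewrite !tnth_mktuple.
  under eq_bigr do rewrite tnth_mktuple.
  rewrite -(big_ord_widen _ (fun i => tnth (xi (Posz (g i)) w) j) (leqnSn m.+1)).
  rewrite big_ord_recr /= /g eqxx; congr (_ + _).
  apply: eq_bigr => i _; rewrite /g.
  have := ltn_ord i; case: eqP => ?; first lia.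
  by case: eqP => ?; first lia.
have iF1 : P.-integrable [set: T] (EFin \o ((h \o G m.+1) \o Z idx)).
  rewrite (_ : (h \o G m.+1) \o Z idx = fun w => h (S m.+1 w)); first exact: hint.
  by apply: funext => w /=; rewrite GZ.
have [iF' EF] := @transfer _ _ _ P _ xi mxi indep ident _ idx idx' (h \o G m.+1) inj inj'
  (measurableT_comp mh (mG m.+1)) iF1.
have i0 := hint m (leqW (leqnSn m)) (leqnn m).
have i1 := hint m.+1 (leqnSn m.+1) (leqnSn m).
have i2 := hint m.+2 (leqnn m.+2) (leqW (leqnSn m)).
have RJ : Rintegral P setT (fun w => h (S m.+1 w)) =
          Rintegral P setT (fun w => h (G m.+1 (Z idx' w))).
  rewrite /Rintegral; congr fine; rewrite -[RHS]/(\int[P]_x ((h \o G m.+1) (Z idx' x))%:E)%E.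
  rewrite -EF; apply: eq_integral => w _ /=; by rewrite GZ.
have key : 0 <= Rintegral P setT (fun w => h (S m w) + h (S m.+2 w) - h (S m.+1 w)
                                          - h (G m.+1 (Z idx' w))).
  apply: Rintegral_ge0 => w _; rewrite GZ' (S_rec m.+1 w) S_rec; exact: hs.
rewrite RintegralB // in key; last by apply: iB => //; apply: iD.
rewrite RintegralB // in key; last by apply: iD.
rewrite RintegralD // in key.
rewrite -RJ in key; lra.
Qed.
End Core.
Arguments S {d T R k}.

Section Final.
Context d (T : measurableType d) (R : realType) (P : probability T R) (k : nat)
  (xi : int -> T -> k.-tuple R) (f : k.-tuple R -> R).
Local Notation U := (k.-tuple R).
Local Notation S := (@S d T R k xi).

Lemma signed_pos p : (0 < p)%N -> signed_sum xi (Posz p) = S p.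
Proof.
move=> p0; apply: funext => w; apply: eq_from_tnth => j; rewrite !tnth_mktuple.
rewrite gtr0_sg ?ltz_nat // mulr1z mul1r /=.
by rewrite big_add1 /= big_mkord.
Qed.

Lemma signed_neg p : (0 < p)%N -> signed_sum xi (- Posz p) = (fun w => vneg (S p w)).
Proof.
move=> p0; apply: funext => w; apply: eq_from_tnth => j; rewrite !tnth_mktuple.
rewrite sgrN gtr0_sg ?ltz_nat // mulrN1z mulN1r abszN /=.
by rewrite big_add1 /= big_mkord.
Qed.

Lemma vneg0 : vneg (vzero R k) = vzero R k.
Proof. by apply: eq_from_tnth => j; rewrite !tnth_mktuple oppr0. Qed.

Lemma Rint_cst (c : R) : Rintegral P setT (fun _ : T => c) = c.
Proof.
rewrite Rintegral_cst //; transitivity (c * 1); last by rewrite mulr1.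
congr (c * _); apply: (@eq_trans _ _ (fine (1%E : \bar R))) => //.
congr fine; exact: probability_setT.
Qed.

Lemma gfun_pos p : gfun P xi f (Posz p) = Rintegral P setT (fun w => f (S p w)).
Proof.
case: p => [|p].
  by rewrite /gfun eqxx; under eq_fun do rewrite S0; rewrite Rint_cst.
rewrite /gfun /= signed_pos // unlock.
done.
Qed.

Lemma gfun_neg p : gfun P xi f (- Posz p) = Rintegral P setT (fun w => f (vneg (S p w))).
Proof.
case: p => [|p].
  by rewrite oppr0 /gfun eqxx; under eq_fun do rewrite S0 vneg0; rewrite Rint_cst.
rewrite /gfun /= signed_neg // unlock.
done.
Qed.

End Final.

Lemma measurable_vneg (R : realType) (k : nat) :
  measurable_fun [set: k.-tuple R] (@vneg R k).
Proof.
apply/measurable_fun_tnthP => j.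
rewrite (_ : _ \o _ = -%R \o (@tnth k R ^~ j)); last first.
  by apply: funext => t /=; rewrite tnth_mktuple.
apply: measurableT_comp; [exact: oppr_measurable|exact: measurable_tnth].
Qed.

Lemma S_nonneg d (T : measurableType d) (R : realType) (k : nat)
  (xi : int -> T -> k.-tuple R) : (forall i w, nonneg (xi i w)) ->
  forall p w, nonneg (S xi p w).
Proof.
move=> xi0 p w j; rewrite tnth_mktuple; apply: sumr_ge0 => i _; exact: xi0.
Qed.

Theorem lemmaA1 (d : measure_display) (T : measurableType d) (R : realType)
  (P : probability T R) (k : nat) (xi : int -> T -> k.-tuple R)
  (f : k.-tuple R -> R) :
  (forall i : int, measurable_fun [set: T] (xi i)) ->
  mutually_independent P xi ->
  identically_distributed P xi ->
  (forall (i : int) (w : T) (j : 'I_k), 0 <= tnth (xi i w) j) ->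
  directionally_convex f ->
  forall n : int,
    (forall m : int, m \in [:: n - 1; n; n + 1] -> m != 0 ->
       P.-integrable [set: T] (EFin \o (f \o signed_sum xi m))) ->
    0 <= gfun P xi f (n - 1) + gfun P xi f (n + 1) - 2 * gfun P xi f n.
Proof.
move=> mxi indep ident xi0 DC n hint.
have mf := DC.1.
have sf := dc_supmod DC.
have sfn := supmod_neg sf.
have mfn : measurable_fun [set: k.-tuple R] (fun x => f (vneg x)).
  exact: (measurableT_comp mf (measurable_vneg R k)).
have icst (c : R) : P.-integrable [set: T] (EFin \o (fun _ : T => c)).
  exact: (finite_measure_integrable_cst P c measurableT).
have Sn := @S_nonneg _ _ _ _ xi xi0.
case: n hint => [[|p]|p] hint.
-
  have G0 : gfun P xi f 0 = f (vzero R k) by rewrite /gfun eqxx.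
  rewrite G0 (_ : 0 - 1 = - Posz 1) // (_ : 0 + 1 = Posz 1) //.
  rewrite gfun_neg gfun_pos.
  have i1 : P.-integrable [set: T] (EFin \o (fun w => f (S xi 1 w))).
    by have := hint (Posz 1) isT isT; rewrite signed_pos.
  have in1 : P.-integrable [set: T] (EFin \o (fun w => f (vneg (S xi 1 w)))).
    by have := hint (- Posz 1) isT isT; rewrite signed_neg.
  have key : 0 <= Rintegral P setT
      (fun w => f (vneg (S xi 1 w)) + f (S xi 1 w) - 2 * f (vzero R k)).
    apply: Rintegral_ge0 => w _.
    have := sf (vneg (S xi 1 w)) (S xi 1 w) (S xi 1 w) (Sn 1%N w) (Sn 1%N w).
    have E1 : vadd (vneg (S xi 1 w)) (S xi 1 w) = vzero R k.
      by apply: eq_from_tnth => j; rewrite !tnth_mktuple addNr.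
    have E2 : vadd (vzero R k) (S xi 1 w) = S xi 1 w.
      by apply: eq_from_tnth => j; rewrite !tnth_mktuple add0r.
    rewrite E1 E2; lra.
  rewrite RintegralB // in key; last first.
    all: try (by apply: iD); try (exact: icst).
  rewrite RintegralD // Rint_cst in key; lra.
-
  rewrite (_ : Posz p.+1 - 1 = Posz p); last by lia.
  rewrite (_ : Posz p.+1 + 1 = Posz p.+2); last by lia.
  rewrite !gfun_pos.
  have Hq : forall q, (q <= p.+2)%N -> (p <= q)%N ->
      P.-integrable [set: T] (EFin \o (fun w => f (S xi q w))).
    case=> [|q] h1 h2.
      rewrite (_ : (fun w => f (S xi 0 w)) = fun _ => f (vzero R k)); first exact: icst.
      by apply: funext => w; rewrite S0.
    have := hint (Posz q.+1); rewrite signed_pos //; apply => //.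
    rewrite !inE.
    have : (q.+1 = p \/ q.+1 = p.+1) \/ q.+1 = p.+2 by lia.
    case=> [[->|->]|->]; [apply/orP; left|apply/orP; right; apply/orP; left|apply/orP; right; apply/orP; right];
      apply/eqP; lia.
  exact: (@core _ _ _ P _ xi mxi indep ident xi0 f p sf mf Hq).
-
  rewrite NegzE in hint *.
  rewrite (_ : - Posz p.+1 - 1 = - Posz p.+2); last by lia.
  rewrite (_ : - Posz p.+1 + 1 = - Posz p); last by lia.
  rewrite !gfun_neg.
  have Hq : forall q, (q <= p.+2)%N -> (p <= q)%N ->
      P.-integrable [set: T] (EFin \o (fun w => f (vneg (S xi q w)))).
    case=> [|q] h1 h2.
      rewrite (_ : (fun w => f (vneg (S xi 0 w))) = fun _ => f (vzero R k)); first exact: icst.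
      by apply: funext => w; rewrite S0 vneg0.
    have := hint (- Posz q.+1); rewrite signed_neg //; apply => //.
    rewrite !inE.
    have : (q.+1 = p \/ q.+1 = p.+1) \/ q.+1 = p.+2 by lia.
    case=> [[->|->]|->]; [apply/orP; right; apply/orP; right|apply/orP; right; apply/orP; left|apply/orP; left];
      apply/eqP; lia.
  have := @core _ _ _ P _ xi mxi indep ident xi0 (fun x => f (vneg x)) p sfn mfn Hq.
  lra.
Qed.
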